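(* Let $B\subseteq C(n,p)$ be finite and $e\ge1$. Then $(I_B)^{[p^e]}=I_{B^{[p^e]}}$, where $B^{[p^e]}=\bigsqcup_{d\ge0}\{c^{p^e}: c\in B_d\}$ and, for $c=(c_1,\dots,c_M)\in C(d,n,p)$, $c^{p^e}=(0,\dots,0,c_1,\dots,c_M)$ ($e$ zeros) $\in C(dp^e,n,p)$. In particular $(I_{c,d})^{[p^e]}=I_{c^{p^e},dp^e}$.
   Context: $\mathbf k$ is algebraically closed of characteristic $p>0$, $S=\mathbf k[x_1,\dots,x_n]$. For an ideal $I=\langle f_1,\dots,f_r\rangle$, its Frobenius power is $I^{[p^e]}=\langle f_1^{p^e},\dots,f_r^{p^e}\rangle$. Base-$p$ expansion: $a=\sum_ja_jp^j$ with $0\le a_j\le p-1$; for $d\ge1$, $M=\max\{j:d_j\ne0\}$. The carry pattern of a degree-$d$ monomial $x_1^{b_1}\cdots x_n^{b_n}$ (with $b_{i,j}$ the base-$p$ digits of $b_i$) is $(c_1,\dots,c_M)$ defined by $\sum_{i}\sum_{j<\ell}b_{i,j}p^j=c_\ell p^\ell+\sum_{j<\ell}d_jp^j$, $1\le\ell\le M$. $C(d,n,p)$ is the set of such carry patterns, ordered componentwise, $C(n,p)=\bigsqcup_dC(d,n,p)$, $B_d=B\cap C(d,n,p)$. $I_{c,d}$ is the ideal generated by the degree-$d$ monomials with carry pattern $\le c$, and $I_B=\sum_d\sum_{c\in B_d}I_{c,d}$. *)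

(* Defs.v *)
From mathcomp Require Import all_boot all_order all_algebra.
From mathcomp Require Import mpoly.
Set Implicit Arguments. Unset Strict Implicit. Unset Printing Implicit Defensive.
Import GRing.Theory.
Local Open Scope ring_scope.

Section Defs.
Variables (k : comRingType) (n : nat).
Implicit Types (p : nat) (m : 'X_{1..n}).

Definition digit p (a j : nat) : nat := ((a %/ p ^ j) %% p)%N.

(* M = max { j : d_j <> 0 } (digits of d vanish beyond index d) *)
Definition topDigit p (d : nat) : nat := (\max_(j < d.+1 | digit p d j != 0%N) j)%N.

(* carry pattern (c_1,...,c_M) of the monomial x^m, d = deg m:
   sum_i sum_{j<l} b_{i,j} p^j = c_l p^l + sum_{j<l} d_j p^j *)
Definition carry p m : seq nat :=
  let d := mdeg m in
  [seq ((\sum_(i < n) \sum_(j < l) digit p (m i) j * p ^ j)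
        - \sum_(j < l) digit p d j * p ^ j) %/ p ^ l
  | l <- iota 1 (topDigit p d)]%N.

(* c \in C(d,n,p)  (carry patterns are defined for d >= 1) *)
Definition inC p (d : nat) (c : seq nat) : Prop :=
  (0 < d)%N /\ exists m, mdeg m = d /\ carry p m = c.

Definition cle (c c' : seq nat) : bool :=
  (size c == size c') && all2 (fun a b => (a <= b)%N) c c'.

Definition genIdeal (G : {mpoly k[n]} -> Prop) (f : {mpoly k[n]}) : Prop :=
  exists r : seq ({mpoly k[n]} * {mpoly k[n]}),
    (forall x, x \in r -> G x.2) /\ f = \sum_(x <- r) x.1 * x.2.

(* Frobenius power I^[q]: ideal generated by the q-th powers of elements of I
   (in characteristic p with q = p^e this is the ideal generated by the q-th
   powers of any generating set of I) *)
Definition frobPow (q : nat) (I : {mpoly k[n]} -> Prop) : {mpoly k[n]} -> Prop :=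
  genIdeal (fun g => exists f, I f /\ g = f ^+ q).

Definition Icd p (c : seq nat) (d : nat) : {mpoly k[n]} -> Prop :=
  genIdeal (fun g => exists m, g = 'X_[m] /\ mdeg m = d /\ cle (carry p m) c).

(* I_B = sum_d sum_{c in B_d} I_{c,d}; B is a finite set of pairs (d, c) with
   c \in C(d,n,p) *)
Definition IB p (B : seq (nat * seq nat)) : {mpoly k[n]} -> Prop :=
  genIdeal (fun g => exists m, exists2 dc, dc \in B &
              g = 'X_[m] /\ mdeg m = dc.1 /\ cle (carry p m) dc.2).

End Defs.

Definition frobPat (e : nat) (c : seq nat) : seq nat := nseq e 0%N ++ c.

Definition frobB (p e : nat) (B : seq (nat * seq nat)) : seq (nat * seq nat) :=
  [seq ((dc.1 * p ^ e)%N, frobPat e dc.2) | dc <- B].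

(* Main.v *)
Require Import Defs.
From mathcomp Require Import all_boot all_order all_algebra.
From mathcomp Require Import mpoly.
From mathcomp Require Import zify.

Section Comb.
Variables (n p : nat).
Hypothesis p_gt1 : 1 < p.

Lemma p_gt0 : 0 < p. Proof. by apply: ltnW. Qed.

Lemma digit_sum a l : \sum_(j < l) digit p a j * p ^ j = a %% p ^ l.
Proof.
elim: l => [|l IH]; first by rewrite big_ord0 expn0 modn1.
rewrite big_ord_recr /= IH /digit.
have Hq : 0 < p ^ l by rewrite expn_gt0 p_gt0.
set R := a %% p ^ l + (a %/ p ^ l) %% p * p ^ l.
have HR : R < p ^ l.+1.
  rewrite /R expnS.
  have h1 : a %% p ^ l < p ^ l by rewrite ltn_mod.
  have h2 : (a %/ p ^ l) %% p < p by rewrite ltn_mod p_gt0.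
  nia.
have Ha : a = (a %/ p ^ l.+1) * p ^ l.+1 + R.
  have e1 := divn_eq a (p ^ l); have e2 := divn_eq (a %/ p ^ l) p.
  rewrite /R expnS (mulnC p) divnMA.
  move: e1 e2; set X := a %/ p ^ l; set Y := X %/ p; set r0 := a %% p ^ l.
  nia.
by rewrite [in RHS]Ha modnMDl modn_small.
Qed.

Definition cval (m : 'X_{1..n}) l :=
  ((\sum_(i < n) (m i %% p ^ l)) - mdeg m %% p ^ l) %/ p ^ l.

Lemma carryE m : carry p m = [seq cval m l | l <- iota 1 (topDigit p (mdeg m))].
Proof.
apply: eq_map => l; rewrite /cval -(digit_sum (mdeg m)).
by congr ((_ - _) %/ _); apply: eq_bigr => i _; rewrite digit_sum.
Qed.

Lemma topDigitE d : 0 < d -> topDigit p d = trunc_log p d.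
Proof.
move=> d0; set t := trunc_log p d.
have Ht1 : p ^ t <= d by apply: trunc_logP.
have Ht2 : d < p ^ t.+1 by apply: trunc_log_ltn.
have Hpt : 0 < p ^ t by rewrite expn_gt0 p_gt0.
apply/eqP; rewrite eqn_leq; apply/andP; split.
  apply/bigmax_leqP => j; rewrite /digit => Hj.
  rewrite leqNgt; apply/negP => tj.
  move: Hj; rewrite divn_small ?mod0n ?eqxx //.
  apply: (leq_trans Ht2); by rewrite leq_exp2l.
have tlt : t < d.+1.
  rewrite ltnS; apply: leq_trans Ht1; apply: ltnW; exact: ltn_expl.
have := @leq_bigmax_cond _ (fun j : 'I_d.+1 => digit p d j != 0) (fun j : 'I_d.+1 => nat_of_ord j) (Ordinal tlt).
apply => /=; rewrite /digit modn_small.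
  by rewrite -lt0n divn_gt0.
by rewrite ltn_divLR // -expnS.
Qed.

Lemma trunc_logX d e : 0 < d -> trunc_log p (d * p ^ e) = trunc_log p d + e.
Proof.
move=> d0; elim: e => [|e IH]; first by rewrite expn0 muln1 addn0.
rewrite expnS mulnCA trunc_logMp // ?IH ?addnS //.
by rewrite muln_gt0 d0 expn_gt0 p_gt0.
Qed.

Lemma cle_frobPat e a b : cle (frobPat e a) (frobPat e b) = cle a b.
Proof. by elim: e => //= e IH; rewrite -IH /cle /= eqSS. Qed.

Lemma carry_frob (m : 'X_{1..n}) e : 0 < mdeg m ->
  carry p (m *+ p ^ e)%MM = frobPat e (carry p m).
Proof.
move=> d0; rewrite !carryE mdegMn !topDigitE ?trunc_logX //; last first.
  by rewrite muln_gt0 d0 expn_gt0 p_gt0.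
rewrite addnC iotaD map_cat /frobPat; congr (_ ++ _).
  have mc (s : seq nat) : [seq 0 | _ <- s] = nseq (size s) 0 by elim: s => //= x s ->.
  rewrite -[X in nseq X _](size_iota 1 e) -mc; apply/eq_in_map => l.
  rewrite mem_iota add1n ltnS => /andP [_ le].
  have dv : p ^ l %| p ^ e by rewrite dvdn_exp2l.
  rewrite /cval (eq_bigr (fun=> 0)) ?big1 //=; last first.
    by move=> i _; rewrite mulmnE; apply/eqP; rewrite -/(dvdn _ _) dvdn_mull.
  by rewrite sub0n div0n.
rewrite addnC iotaDl -map_comp; apply: eq_map => l /=.
rewrite /cval mdegMn.
have Hq : 0 < p ^ e by rewrite expn_gt0 p_gt0.
rewrite expnD mulnC -muln_modl (eq_bigr (fun i => (m i %% p ^ l) * p ^ e)); last first.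
  by move=> i _; rewrite mulmnE muln_modl.
by rewrite -big_distrl /= -mulnBl divnMr.
Qed.

Lemma all2_nth' (r : nat -> nat -> bool) (s t : seq nat) i :
  all2 r s t -> i < size s -> r (nth 0 s i) (nth 0 t i).
Proof.
elim: s t i => [|x s IH] [|y t] [|i] //=; first by case/andP.
by case/andP => _ H Hi; apply: IH.
Qed.

Lemma carry_unfrob (m' : 'X_{1..n}) e c d : 0 < e -> mdeg m' = d * p ^ e ->
  cle (carry p m') (frobPat e c) ->
  exists m : 'X_{1..n}, m' = (m *+ p ^ e)%MM.
Proof.
move=> e0 dm' /andP [/eqP Hsz Hall].
have Hq : 0 < p ^ e by rewrite expn_gt0 p_gt0.
have He : e.-1 < size (carry p m').
  rewrite Hsz size_cat size_nseq; lia.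
have := @all2_nth' leq _ _ _ Hall He.
have -> : nth 0 (frobPat e c) e.-1 = 0.
  by rewrite nth_cat size_nseq ltn_predL e0 nth_nseq if_same.
move: He; rewrite carryE size_map size_iota => He.
rewrite (nth_map 0) ?size_iota // nth_iota // add1n prednK // leqn0 /cval dm' modnMl subn0.
set S := \sum_(i < n) _ => /eqP HS.
have HSlt : S < p ^ e.
  rewrite ltnNge; apply/negP => le; move: HS; apply/eqP.
  by rewrite -lt0n divn_gt0.
have HSmod : S %% p ^ e = 0.
  by rewrite /S modn_summ -mdegE dm' modnMl.
have S0 : S = 0 by rewrite -HSmod modn_small.
have Hi i : p ^ e %| m' i.
  have /eqP := S0; rewrite sum_nat_eq0 => /forallP /(_ i) /=.
  by rewrite /dvdn.
exists [multinom [tuple m' i %/ p ^ e | i < n]].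
by apply/mnmP => i; rewrite mulmnE mnmE divnK.
Qed.

End Comb.

Section Ideal.
Import GRing.Theory.
Local Open Scope ring_scope.
Variables (k : fieldType) (n : nat).
Notation R := {mpoly k[n]}.
Implicit Types (G : R -> Prop).

Lemma genI_sub G g : G g -> genIdeal G g.
Proof. by move=> Gg; exists [:: (1, g)]; split; [move=> x; rewrite inE => /eqP -> | rewrite big_seq1 mul1r]. Qed.

Lemma genI_0 G : genIdeal G 0.
Proof. by exists [::]; rewrite big_nil. Qed.

Lemma genI_add G f g : genIdeal G f -> genIdeal G g -> genIdeal G (f + g).
Proof.
move=> [r1 [H1 ->]] [r2 [H2 ->]]; exists (r1 ++ r2); split; last by rewrite big_cat.
by move=> x; rewrite mem_cat => /orP [/H1|/H2].
Qed.

Lemma genI_mull G h f : genIdeal G f -> genIdeal G (h * f).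
Proof.
move=> [r [H ->]]; exists [seq (h * x.1, x.2) | x <- r]; split.
  by move=> x /mapP [y /H Hy ->].
by rewrite big_map mulr_sumr; apply: eq_bigr => x _; rewrite mulrA.
Qed.

Lemma genI_sum G (r : seq (R * R)) :
  (forall x, x \in r -> genIdeal G x.2) -> genIdeal G (\sum_(x <- r) x.1 * x.2).
Proof.
elim: r => [|x r IH] H; first by rewrite big_nil; apply: genI_0.
rewrite big_cons; apply: genI_add; first by apply: genI_mull; apply: H; rewrite inE eqxx.
by apply: IH => y Hy; apply: H; rewrite inE Hy orbT.
Qed.

Lemma genI_sumF G (r : seq (R * R)) (F : R * R -> R) :
  (forall x, x \in r -> genIdeal G (F x)) -> genIdeal G (\sum_(x <- r) F x).
Proof.
elim: r => [|x r IH] H; first by rewrite big_nil; apply: genI_0.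
rewrite big_cons; apply: genI_add; first by apply: H; rewrite inE eqxx.
by apply: IH => y Hy; apply: H; rewrite inE Hy orbT.
Qed.

Lemma genI_mono G G' f : (forall g, G g -> genIdeal G' g) -> genIdeal G f -> genIdeal G' f.
Proof. by move=> HG [r [H ->]]; apply: genI_sum => x /H /HG. Qed.

Definition powG (q : nat) G := fun g : R => exists f, G f /\ g = f ^+ q.

Variable q : nat.
Hypothesis q_gt0 : (0 < q)%N.
Hypothesis qchar : [char R].-nat q.

Lemma pow_sum (r : seq (R * R)) (F : R * R -> R) :
  (\sum_(x <- r) F x) ^+ q = \sum_(x <- r) F x ^+ q.
Proof.
elim: r => [|x r IH]; first by rewrite !big_nil expr0n eqn0Ngt q_gt0.
by rewrite !big_cons exprDn_pchar // IH.
Qed.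

Lemma frob_gen G f : frobPow q (genIdeal G) f <-> genIdeal (powG q G) f.
Proof.
split.
  apply: genI_mono => g [h [[r [H ->]] ->]].
  rewrite pow_sum; apply: genI_sumF => x Hx.
  rewrite exprMn; apply: genI_mull; apply: genI_sub; exists x.2; split => //.
  exact: H.
apply: genI_mono => g [h [Gh ->]]; apply: genI_sub; exists h; split => //.
exact: genI_sub.
Qed.
End Ideal.

Section Main.
Import GRing.Theory.
Local Open Scope ring_scope.

Lemma gen_eq (k : fieldType) (n : nat) (G G' : {mpoly k[n]} -> Prop) f :
  (forall g, G g -> G' g) -> (forall g, G' g -> G g) -> (genIdeal G f <-> genIdeal G' f).
Proof.
move=> H1 H2; split; apply: genI_mono => g Hg; apply: genI_sub; [exact: H1|exact: H2].
Qed.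

Theorem mainTheorem5 (k : closedFieldType) (p : nat) (hp : p \in [pchar k])
  (n : nat) (B : seq (nat * seq nat)) (e : nat) :
  (forall dc, dc \in B -> inC n p dc.1 dc.2) -> (0 < e)%N ->
  (forall f : {mpoly k[n]},
      frobPow (p ^ e) (IB p B) f <-> IB p (frobB p e B) f) /\
  (forall (d : nat) (c : seq nat), inC n p d c ->
     forall f : {mpoly k[n]},
       frobPow (p ^ e) (Icd p c d) f <-> Icd p (frobPat e c) (d * p ^ e) f).
Proof.
move=> HB e0.
have pr : prime p := pcharf_prime hp.
have p1 : (1 < p)%N := prime_gt1 pr.
have q0 : (0 < p ^ e)%N by rewrite expn_gt0 ltnW.
have hpm : p \in [pchar {mpoly k[n]}] by rewrite pchar_lalg.
have qc : [pchar {mpoly k[n]}].-nat (p ^ e)%N.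
  by rewrite (eq_pnat _ (pcharf_eq hpm)) pnatX pnat_id.
split.
  move=> f; rewrite /IB (@frob_gen _ _ _ q0 qc); apply: gen_eq => g.
    case=> h [[m [dc Hdc [-> [Hd Hc]]]] ->].
    have [d0 _] := HB _ Hdc.
    exists (m *+ p ^ e)%MM; exists (dc.1 * p ^ e, frobPat e dc.2)%N.
      by apply/mapP; exists dc.
    rewrite mpolyXn mdegMn Hd carry_frob // ?Hd // cle_frobPat; by split.
  case=> m' [dc' /mapP [dc Hdc ->] [-> [/= Hd /= Hc]]].
  have [d0 _] := HB _ Hdc.
  have [m Hm] := @carry_unfrob n p p1 _ _ _ _ e0 Hd Hc.
  have Hdm : mdeg m = dc.1.
    by apply/eqP; rewrite -(eqn_pmul2r q0) -mdegMn -Hm Hd.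
  exists 'X_[m]; split; last by rewrite mpolyXn Hm.
  exists m; exists dc => //; split => //; split => //.
  by rewrite -(cle_frobPat e) -carry_frob // ?Hdm // -Hm.
move=> d c [d0 _] f; rewrite /Icd (@frob_gen _ _ _ q0 qc); apply: gen_eq => g.
  case=> h [[m [-> [Hd Hc]]] ->].
  exists (m *+ p ^ e)%MM.
  rewrite mpolyXn mdegMn Hd carry_frob // ?Hd // cle_frobPat; by split.
case=> m' [-> [Hd Hc]].
have [m Hm] := @carry_unfrob n p p1 _ _ _ _ e0 Hd Hc.
have Hdm : mdeg m = d.
  by apply/eqP; rewrite -(eqn_pmul2r q0) -mdegMn -Hm Hd.
exists 'X_[m]; split; last by rewrite mpolyXn Hm.
exists m; split => //; split => //.
by rewrite -(cle_frobPat e) -carry_frob // ?Hdm // -Hm.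
Qed.
End Main.
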